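(* In the setting and for the adaptive regularized Newton method described in the context, suppose conditions (A.2)–(A.3) hold and that $z_k$ satisfies the Armijo condition. Then $\|z_k-x_k\|\le\frac{2\kappa_g}{\sigma_k-\kappa_H}$ whenever $\sigma_k>\kappa_H$.
   Context: Setting: $\mathcal E$ is a finite-dimensional real Euclidean space with inner product $\langle\cdot,\cdot\rangle$, norm $\|\cdot\|$; $\mathcal M\subset\mathcal E$ is a smooth embedded Riemannian submanifold of dimension $n$ with tangent spaces $\mathcal T_x\mathcal M$, tangent bundle $\mathcal T\mathcal M$, Riemannian metric $\langle\cdot,\cdot\rangle_x$ and norm $\|\cdot\|_x$. $f$ is a smooth real function on an open set of $\mathcal E$ containing $\mathrm{conv}(\mathcal M)$, with Euclidean gradient/Hessian $\nabla f,\nabla^2 f$ and Riemannian gradient/Hessian $\mathrm{grad}\, f,\mathrm{Hess}\, f$ of $f|_{\mathcal M}$. $R:\mathcal T\mathcal M\to\mathcal M$ is a smooth retraction ($R_x(0_x)=x$, $DR_x(0_x)=\mathrm{id}$). Adaptive regularized Newton method: fix $x_0\in\mathcal M$, $\sigma_0>0$, $0<\eta_1\le\eta_2<1$, $0<\gamma_0<1<\gamma_1\le\gamma_2$, $\rho,\delta\in(0,1)$, $\alpha_0\in(0,1]$, $T>0$, $\theta>1$, $\epsilon\ge0$, and symmetric linear operators $H_k$ on $\mathcal E$. At iteration $k$ let $m_k(x)=\langle\nabla f(x_k),x-x_k\rangle+\frac12\langle H_k(x-x_k),x-x_k\rangle+\frac{\sigma_k}2\|x-x_k\|^2$, $g:=\mathrm{grad}\,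 m_k(x_k)$ ($=\mathrm{grad}\, f(x_k)$) and $\mathcal H:=\mathrm{Hess}\, m_k(x_k)$ (Riemannian gradient and Hessian of $m_k|_{\mathcal M}$ at $x_k$). Modified CG (inner products/norms in $\langle\cdot,\cdot\rangle_{x_k}$): $\eta_0=0$, $r_0=g$, $p_0=-r_0$, $i=0$; while $i\le n-1$: $\pi_i=\langle p_i,\mathcal Hp_i\rangle$; if $\pi_i/\|p_i\|^2\le\epsilon$ then (if $i=0$: $s_k=p_0$, $d_k=0$; else $s_k=\eta_i$ and $d_k=p_i$ if $\pi_i/\|p_i\|^2\le-\epsilon$, $d_k=0$ otherwise) and stop; else $\alpha_i=\|r_i\|^2/\pi_i$, $\eta_{i+1}=\eta_i+\alpha_ip_i$, $r_{i+1}=r_i+\alpha_i\mathcal Hp_i$; if $\|r_{i+1}\|\le\min\{\|r_0\|^\theta,T\}$ then $s_k=\eta_{i+1}$, $d_k=0$ and stop; else $\beta_{i+1}=\|r_{i+1}\|^2/\|r_i\|^2$, $p_{i+1}=-r_{i+1}+\beta_{i+1}p_i$, $i\leftarrow i+1$. Then $\xi_k=s_k+\tau_kd_k$ with $\tau_k=\langle d_k,g\rangle/\langle d_k,\mathcal Hd_k\rangle$ if $d_k\ne0$, $\xi_k=s_k$ if $d_k=0$. Trial point: $\alpha_k=\alpha_0\delta^h$, $h$ the smallest nonnegative integer with $m_k(R_{x_k}(\alpha_0\delta^h\xi_k))\le\rho\alpha_0\delta^h\langle g,\xi_k\rangle_{x_k}$ (Armijo condition); $z_k=R_{x_k}(\alpha_k\xi_k)$;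 $\rho_k=(f(z_k)-f(x_k))/m_k(z_k)$; $x_{k+1}=z_k$ if $\rho_k\ge\eta_1$, else $x_{k+1}=x_k$; $\sigma_{k+1}\in(0,\gamma_0\sigma_k]$ if $\rho_k\ge\eta_2$, $\in[\gamma_0\sigma_k,\gamma_1\sigma_k]$ if $\eta_1\le\rho_k<\eta_2$, $\in[\gamma_1\sigma_k,\gamma_2\sigma_k]$ otherwise; the method stops if $\mathrm{grad}\, f(x_k)=0$. Conditions: (A.2) there is $\kappa_g>0$ with $\|\nabla f(x_k)\|\le\kappa_g$ for all $k$; (A.3) there is $\kappa_H>0$ with $\|H_k\|\le\kappa_H$ for all $k$. *)

(* Defs.v *)
From HB Require Import structures.
From mathcomp Require Import all_boot all_order all_algebra.
From mathcomp Require Import reals exp.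
Set Implicit Arguments. Unset Strict Implicit. Unset Printing Implicit Defensive.
Import Order.TTheory GRing.Theory Num.Theory.
Local Open Scope ring_scope.

Section ARNT.
Variables (R : realType) (N : nat).
Notation E := 'rV[R]_N.

(* Euclidean inner product and norm on E = R^N (any finite-dim Euclidean
   space is isometric to one of these). *)
Definition dot (u v : E) : R := \sum_(i < N) u 0 i * v 0 i.
Definition enorm (u : E) : R := Num.sqrt (dot u u).

(* the quadratic model m_k, with Euclidean gradient gf = grad f(x_k),
   H_k given by the matrix Hk acting as v |-> v *m Hk *)
Definition mk (gf xk : E) (Hk : 'M[R]_N) (sigma : R) (x : E) : R :=
  dot gf (x - xk) + 2^-1 * dot ((x - xk) *m Hk) (x - xk)
  + sigma / 2 * dot (x - xk) (x - xk).

(* Hs : the operator \mathcal H (v |-> Hs v),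
   g : r_0, eps, theta, T the parameters.  [cg_loop k i eta r p] performs the
   loop body with counter i, with k iterations left before the guard
   i <= n-1 fails.  Returns (s_k, d_k). *)
Fixpoint cg_loop (Hs : E -> E) (g : E) (eps theta T : R)
    (k i : nat) (eta r p : E) : E * E :=
  match k with
  | 0 => (eta, 0) (* loop guard exhausted: never reached in exact arithmetic *)
  | k'.+1 =>
    let pi := dot p (Hs p) in
    if pi / dot p p <= eps then
      if i == 0%N then (p, 0)
      else (eta, if pi / dot p p <= - eps then p else 0)
    else
      let alpha := dot r r / pi in
      let eta' := eta + alpha *: p in
      let r' := r + alpha *: Hs p in
      if enorm r' <= Num.min (powR (enorm g) theta) T then (eta', 0)
      else
        let beta := dot r' r' / dot r r in
        let p' := - r' + beta *: p in
        cg_loop Hs g eps theta T k' i.+1 eta' r' p'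
  end.

Definition modCG (n : nat) (Hs : E -> E) (g : E) (eps theta T : R) : E * E :=
  cg_loop Hs g eps theta T n 0 0 g (- g).

Definition xi_of (n : nat) (Hs : E -> E) (g : E) (eps theta T : R) : E :=
  let sd := modCG n Hs g eps theta T in
  if sd.2 == 0 then sd.1
  else sd.1 + (dot sd.2 g / dot sd.2 (Hs sd.2)) *: sd.2.

End ARNT.

(* Main.v *)
Require Import Defs.
From HB Require Import structures.
From mathcomp Require Import all_boot all_order all_algebra.
From mathcomp Require Import reals exp.
From mathcomp Require Import ring lra.
Import Order.TTheory GRing.Theory Num.Theory.
Local Open Scope ring_scope.
Set Implicit Arguments. Unset Strict Implicit.

Section DotLemmas.
Variables (R : realType) (N : nat).
Implicit Types u v w : 'rV[R]_N.

Lemma dotC u v : dot u v = dot v u.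
Proof. by rewrite /dot; apply: eq_bigr => i _; rewrite mulrC. Qed.
Lemma dotDl u v w : dot (u + v) w = dot u w + dot v w.
Proof. by rewrite /dot -big_split; apply: eq_bigr => i _; rewrite mxE mulrDl. Qed.
Lemma dotZl a u w : dot (a *: u) w = a * dot u w.
Proof. by rewrite /dot mulr_sumr; apply: eq_bigr => i _; rewrite mxE mulrA. Qed.
Lemma dotNl u w : dot (- u) w = - dot u w.
Proof. by rewrite -scaleN1r dotZl mulN1r. Qed.
Lemma dot0l w : dot 0 w = 0.
Proof. by rewrite /dot big1 // => i _; rewrite mxE mul0r. Qed.
Lemma dotDr u v w : dot w (u + v) = dot w u + dot w v.
Proof. by rewrite dotC dotDl !(dotC w). Qed.
Lemma dotZr a u w : dot w (a *: u) = a * dot w u.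
Proof. by rewrite dotC dotZl dotC. Qed.
Lemma dotNr u w : dot w (- u) = - dot w u.
Proof. by rewrite dotC dotNl dotC. Qed.
Lemma dot0r w : dot w 0 = 0.
Proof. by rewrite dotC dot0l. Qed.
Lemma dot_ge0 u : 0 <= dot u u.
Proof. by rewrite /dot; apply: sumr_ge0 => i _; rewrite -expr2 sqr_ge0. Qed.
Lemma dot_eq0 u : dot u u = 0 -> u = 0.
Proof.
move=> /eqP; rewrite /dot psumr_eq0; last by move=> i _; rewrite -expr2 sqr_ge0.
move=> /allP H; apply/rowP => i; rewrite mxE.
have := H i (mem_index_enum i); rewrite /= mulf_eq0 orbb => /eqP //.
Qed.
Lemma dot_gt0 u : u != 0 -> 0 < dot u u.
Proof.
move=> hu; rewrite lt_def dot_ge0 andbT; apply/eqP => /dot_eq0 h.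
by rewrite h eqxx in hu.
Qed.
Lemma dot_cs2 u v : dot u v ^+ 2 <= dot u u * dot v v.
Proof.
have [c0|cn0] := eqVneq (dot v v) 0.
  by rewrite c0 (dot_eq0 c0) dot0r expr0n /= mulr0.
set a := dot u u; set b := dot u v; set c := dot v v.
have cpos : 0 < c by rewrite lt_def cn0 dot_ge0.
pose t := - b / c.
have h0 := dot_ge0 (u + t *: v).
rewrite !dotDl !dotDr !dotZl !dotZr (dotC v u) -/a -/b -/c in h0.
rewrite -subr_ge0.
have -> : a * c - b ^+ 2 = c * (a + t * b + (t * b + t * (t * c))).
  by rewrite /t; field; exact: cn0.
exact: mulr_ge0 (ltW cpos) h0.
Qed.
Lemma dot_cs u v : `|dot u v| <= enorm u * enorm v.
Proof.
rewrite /enorm -sqrtrM ?dot_ge0 // -sqrtr_sqr ler_sqrt; last by apply: mulr_ge0; apply: dot_ge0.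
exact: dot_cs2.
Qed.
Lemma enorm_sq u : enorm u ^+ 2 = dot u u.
Proof. by rewrite /enorm sqr_sqrtr // dot_ge0. Qed.
Lemma enorm_ge0 u : 0 <= enorm u.
Proof. by rewrite /enorm sqrtr_ge0. Qed.
End DotLemmas.
Section CG.
Variables (R : realType) (N : nat) (Tx : {vspace 'rV[R]_N}) (Hs : 'M[R]_N) (g : 'rV[R]_N).
Hypothesis hgT : g \in Tx.
Hypothesis hHsT : forall v, v \in Tx -> v *m Hs \in Tx.
Hypothesis hHsym : forall u v, u \in Tx -> v \in Tx -> dot u (v *m Hs) = dot (u *m Hs) v.
Variables eps theta T : R.
Hypothesis heps : 0 <= eps.
Hypothesis hT : 0 < T.

Record Inv (S : {vspace 'rV[R]_N}) (eta r p : 'rV[R]_N) : Prop := {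
 i_S : (S <= Tx)%VS; i_eta : eta \in Tx; i_r : r \in Tx; i_p : p \in Tx;
 i1 : forall v, v \in S -> dot v r = 0;
 i2 : forall v, v \in S -> dot v (p *m Hs) = 0;
 i3 : forall v, v \in S -> v *m Hs \in (S + <[p]>)%VS;
 i4 : r \in (S + <[p]>)%VS;
 i5 : g \in (S + <[p]>)%VS;
 i6 : dot r p = - dot r r;
 i7 : dot g p = - dot r r;
 i8 : dot g eta <= 0;
 i9 : dot r r != 0 }.

Definition Out (sd : 'rV[R]_N * 'rV[R]_N) :=
  dot g sd.1 <= 0 /\ (sd.2 != 0 -> dot sd.2 (sd.2 *m Hs) <= 0).

Lemma cg_ok k i eta r p S : Inv S eta r p ->
  Out (cg_loop (fun v => v *m Hs) g eps theta T k i eta r p).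
Proof.
elim: k i eta r p S => [|k IH] i eta r p S inv /=.
  by split; [exact: i8 inv | rewrite eqxx].
have hgp : dot g p <= 0 by rewrite (i7 inv) oppr_le0 dot_ge0.
case: ifP => hle.
  case: ifP => _; first by split => //=; rewrite eqxx.
  split => /=; first exact: i8 inv.
  case: ifP => hle2; last by rewrite eqxx.
  move=> hp0; have hpp := dot_gt0 hp0.
  move: hle2; rewrite ler_pdivrMr // => /le_trans; apply.
  by rewrite mulNr oppr_le0; apply: mulr_ge0 => //; exact: ltW.
set pi := dot p (p *m Hs).
have pipos : 0 < pi.
  have hpp := dot_ge0 p.
  have [d0|dn0] := eqVneq (dot p p) 0.
    by move: hle; rewrite d0 invr0 mulr0 heps.
  have dpos : 0 < dot p p by rewrite lt_def dn0 hpp.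
  move/negbT: hle; rewrite -ltNge => /(le_lt_trans heps).
  by rewrite ltr_pdivlMr // mul0r.
have rpos : 0 < dot r r by rewrite lt_def (i9 inv) dot_ge0.
set alpha := dot r r / pi.
have apos : 0 < alpha by rewrite divr_gt0.
have an0 : alpha != 0 by rewrite gt_eqF.
have hapi : alpha * pi = dot r r by rewrite /alpha divfK // gt_eqF.
set eta' := eta + alpha *: p.
set r' := r + alpha *: (p *m Hs).
have hg' : dot g eta' <= 0.
  rewrite /eta' dotDr dotZr; have h1 := i8 inv.
  have h2 : alpha * dot g p <= 0 by apply: mulr_ge0_le0 => //; exact: ltW.
  lra.
case: ifP => hr'.
  by split => /=; [exact: hg' | rewrite eqxx].
set beta := dot r' r' / dot r r.
set p' := - r' + beta *: p.
apply: (IH _ _ _ _ (S + <[p]>)%VS).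
set S' := (S + <[p]>)%VS.
have pTx := i_p inv.
have pHTx := hHsT pTx.
have hSS' : (S <= S')%VS by exact: addvSl.
have hpS' : p \in S' by apply: (subvP (addvSr S <[p]>)); exact: memv_line.
have rS' : r \in S' := i4 inv.
have gS' : g \in S' := i5 inv.
have I1 : forall v, v \in S' -> dot v r' = 0.
  move=> v /memv_addP [u uS [w /vlineP [c ->] ->]].
  rewrite /r' dotDl !dotZl !dotDr !dotZr (i1 inv uS) (i2 inv uS) (dotC p r) (i6 inv) -/pi hapi.
  ring.
have eS : alpha *: (p *m Hs) = r' - r by rewrite /r' addrAC subrr add0r.
have r'n0 : dot r' r' != 0.
  apply/eqP => h0; move: hr'; rewrite /enorm h0 sqrtr0 le_min powR_ge0 ltW //.
have r'Tx : r' \in Tx by rewrite memvD ?(i_r inv) // memvZ.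
have p'Tx : p' \in Tx by rewrite memvD ?memvN // memvZ.
have key : alpha * dot (p *m Hs) r' = dot r' r'.
  by rewrite -dotZl eS dotDl dotNl (I1 _ rS') subr0.
have hb : beta * dot r r = dot r' r' by rewrite /beta divfK // (i9 inv).
have hpr' : dot (p *m Hs) r' = beta * pi.
  apply: (mulfI an0); rewrite key mulrCA hapi hb //.
have I2 : forall v, v \in S' -> dot v (p' *m Hs) = 0.
  move=> v /memv_addP [u uS [w /vlineP [c ->] ->]].
  have uTx : u \in Tx := subvP (i_S inv) _ uS.
  rewrite dotDl dotZl (hHsym uTx p'Tx) (hHsym pTx p'Tx) /p' !dotDr !dotNr !dotZr.
  rewrite (I1 _ (i3 inv uS)) -(hHsym uTx pTx) (i2 inv uS) (dotC (p *m Hs) p) -/pi hpr'.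
  ring.
set S'' := (S' + <[p']>)%VS.
have hS'S'' : (S' <= S'')%VS by exact: addvSl.
have p'S'' : p' \in S'' by apply: (subvP (addvSr S' <[p']>)); exact: memv_line.
have hr'e : beta *: p - p' = r' by rewrite /p' opprD opprK addrC subrK.
have I3 : forall v, v \in S' -> v *m Hs \in S''.
  move=> v /memv_addP [u uS [w /vlineP [c ->] ->]].
  rewrite mulmxDl -scalemxAl memvD //.
    exact: (subvP hS'S'') (i3 inv uS).
  apply: memvZ.
  have -> : p *m Hs = alpha^-1 *: (beta *: p - p' - r).
    by rewrite hr'e -eS scalerA mulVf // scale1r.
  apply: memvZ; apply: memvB; last exact: (subvP hS'S'') rS'.
  apply: memvB => //; apply: memvZ; exact: (subvP hS'S'') hpS'.
split.
- by rewrite subv_add (i_S inv) -memvE pTx.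
- by rewrite memvD ?(i_eta inv) // memvZ.
- exact: r'Tx.
- exact: p'Tx.
- exact: I1.
- exact: I2.
- exact: I3.
- rewrite -hr'e; apply: memvB => //; apply: memvZ; exact: (subvP hS'S'') hpS'.
- exact: (subvP hS'S'') gS'.
- by rewrite /p' dotDr dotNr dotZr (dotC r' p) (I1 _ hpS') mulr0 addr0.
- by rewrite /p' dotDr dotNr dotZr (I1 _ gS') (i7 inv) oppr0 add0r mulrN hb.
- exact: hg'.
- exact: r'n0.
Qed.

Hypothesis hg0 : g != 0.

Lemma inv0 : Inv 0%VS 0 g (-g).
Proof.
split.
- exact: sub0v.
- exact: mem0v.
- exact: hgT.
- by rewrite memvN.
- by move=> v; rewrite memv0 => /eqP ->; exact: dot0l.
- by move=> v; rewrite memv0 => /eqP ->; exact: dot0l.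
- by move=> v; rewrite memv0 => /eqP ->; rewrite mul0mx mem0v.
- apply: (subvP (addvSr 0%VS _)); rewrite -{1}[g]opprK memvN; exact: memv_line.
- apply: (subvP (addvSr 0%VS _)); rewrite -{1}[g]opprK memvN; exact: memv_line.
- by rewrite dotNr.
- by rewrite dotNr.
- by rewrite dot0r.
- apply/eqP => /dot_eq0 h; move: hg0; by rewrite h eqxx.
Qed.

Lemma xi_ok n : dot g (xi_of n (fun v => v *m Hs) g eps theta T) <= 0.
Proof.
rewrite /xi_of /modCG; have := cg_ok n 0 inv0.
case: (cg_loop _ _ _ _ _ _ _ _ _ _) => s d [/= hs hd].
case: ifP => hd0 //.
rewrite dotDr dotZr (dotC d g).
have hpi := hd (negbT hd0).
have : dot g d / dot d (d *m Hs) * dot g d <= 0.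
  by rewrite mulrAC -expr2; apply: mulr_ge0_le0; rewrite ?sqr_ge0 ?invr_le0.
lra.
Qed.
End CG.
Unset Implicit Arguments.
Theorem lemma4p7 (R : realType) (N : nat)
    (* embedded manifold M in E = R^N, current iterate x_k in M *)
    (M : 'rV[R]_N -> Prop) (xk : 'rV[R]_N) (hxk : M xk)
    (* tangent space T_{x_k}M, a linear subspace of E with induced metric *)
    (Tx : {vspace 'rV[R]_N})
    (* retraction at x_k *)
    (Rx : 'rV[R]_N -> 'rV[R]_N) (hR0 : Rx 0 = xk)
    (hRM : forall v, v \in Tx -> M (Rx v))
    (* method parameters *)
    (sigma rho delta alpha0 T theta eps : R)
    (hsigma : 0 < sigma) (hrho : 0 < rho < 1) (hdelta : 0 < delta < 1)
    (halpha0 : 0 < alpha0 <= 1) (hT : 0 < T) (htheta : 1 < theta)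
    (heps : 0 <= eps)
    (* Euclidean gradient of f at x_k, symmetric H_k *)
    (gf : 'rV[R]_N) (Hk : 'M[R]_N) (hHk : Hk^T = Hk)
    (* g = grad m_k(x_k) = grad f(x_k): orthogonal projection of gf on Tx *)
    (g : 'rV[R]_N) (hgT : g \in Tx)
    (hgproj : forall v, v \in Tx -> dot (gf - g) v = 0)
    (hg0 : g != 0) (* the method has not stopped at iteration k *)
    (* \mathcal H = Hess m_k(x_k): self-adjoint linear operator on Tx *)
    (Hs : 'M[R]_N)
    (hHsT : forall v, v \in Tx -> v *m Hs \in Tx)
    (hHsym : forall u v, u \in Tx -> v \in Tx -> dot u (v *m Hs) = dot (u *m Hs) v)
    (* (A.2), (A.3) *)
    (kappa_g kappa_H : R) (hkg : 0 < kappa_g) (hkH : 0 < kappa_H)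
    (hA2 : enorm gf <= kappa_g)
    (hA3 : forall v, enorm (v *m Hk) <= kappa_H * enorm v)
    (* Armijo step: alpha_k = alpha0 delta^h, h smallest, z_k = R_{x_k}(alpha_k xi_k) *)
    (h : nat) (zk : 'rV[R]_N) :
    let xi := xi_of (\dim Tx) (fun v => v *m Hs) g eps theta T in
    let m := mk gf xk Hk sigma in
    (forall h' : nat, (h' < h)%N ->
       ~ (m (Rx ((alpha0 * delta ^+ h') *: xi)) <= rho * (alpha0 * delta ^+ h') * dot g xi)) ->
    zk = Rx ((alpha0 * delta ^+ h) *: xi) ->
    m zk <= rho * (alpha0 * delta ^+ h) * dot g xi ->
    kappa_H < sigma ->
    enorm (zk - xk) <= 2 * kappa_g / (sigma - kappa_H).
Proof.
move=> xi m Hnot Hz Harm Hlt.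
have hxi : dot g xi <= 0 by exact: (xi_ok hgT hHsT hHsym theta heps hT hg0).
have hm : m zk <= 0.
  apply: (le_trans Harm); apply: mulr_ge0_le0 => //.
  case/andP: hrho => hr _; case/andP: hdelta => hd _; case/andP: halpha0 => ha _.
  by apply: mulr_ge0; [exact: ltW | apply: mulr_ge0; [exact: ltW | apply: exprn_ge0; exact: ltW]].
move: hm; rewrite /m /mk.
set d := zk - xk.
have n0 := enorm_ge0 d.
have A : -(kappa_g * enorm d) <= dot gf d.
  have := dot_cs gf d; rewrite ler_norml => /andP [hh _].
  have := enorm_ge0 gf; nra.
have B : -(kappa_H * enorm d * enorm d) <= dot (d *m Hk) d.
  have := dot_cs (d *m Hk) d; rewrite ler_norml => /andP [hh _].
  have := hA3 d; have := enorm_ge0 (d *m Hk); nra.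
rewrite -enorm_sq => hm.
rewrite ler_pdivlMr ?subr_gt0 //.
nra.
Qed.
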